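(* Let $n\ge2$, let $K\subset\mathbb{R}^n$ be compact and $f:K\to\mathbb{R}^m$ continuous. For any $\epsilon>0$ there exists $F:\mathbb{R}^n\to\mathbb{R}^m$ such that (1) $F$ is the feedforward function of a radial neural network with $2M(f,K,\epsilon/2)$ hidden layers whose widths are all $\max(n,m)$, and (2) $|F(x)-f(x)|<\epsilon$ for all $x\in K$.
   Context: $B_r(c)$ is the open ball. $M(f,K,\delta)$ is the minimal $M$ for which there exist $c_1,\dots,c_M\in K$, $r_1,\dots,r_M\in(0,1)$ with $K\subseteq\bigcup_iB_{r_i}(c_i)$, $f(B_{r_i}(c_i)\cap K)\subseteq B_\delta(f(c_i))$ for all $i$, and $|c_i-c_j|\ge r_i$ for all $i\ne j$. For $h:\mathbb{R}\to\mathbb{R}$ piecewise differentiable, the radial rescaling function $h^{(k)}(v)=h(|v|)v/|v|$ ($v\ne0$), $h^{(k)}(0)=0$. A radial neural network with widths $(n_0,\dots,n_L)$ has weights $W_i\in\mathbb{R}^{n_i\times n_{i-1}}$, biases $b_i$, radial rescaling functions $\rho_i$ on $\mathbb{R}^{n_i}$; hidden layers are $1,\dots,L-1$; feedforward function $F=F_L$, $F_0=\mathrm{id}$, $F_i(x)=\rho_i(W_iF_{i-1}(x)+b_i)$. *)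

(* Defs.v *)
From HB Require Import structures.
From mathcomp Require Import all_boot all_order all_algebra.
From mathcomp Require Import all_classical all_reals all_analysis.
Set Implicit Arguments. Unset Strict Implicit. Unset Printing Implicit Defensive.
Import Order.TTheory GRing.Theory Num.Theory.
Import numFieldNormedType.Exports.
Local Open Scope classical_set_scope.
Local Open Scope ring_scope.

Section RadialDefs.
Variable R : realType.

Definition enorm (k : nat) (v : 'cV[R]_k) : R :=
  Num.sqrt (\sum_(i < k) v i ord0 ^+ 2).

Definition eball (k : nat) (c : 'cV[R]_k) (r : R) : set 'cV[R]_k :=
  [set x | enorm (x - c) < r].

Definition cover_ok (n m : nat) (f : 'cV[R]_n -> 'cV[R]_m)
    (K : set 'cV[R]_n) (delta : R) (M : nat) : Prop :=
  exists (c : 'I_M -> 'cV[R]_n) (r : 'I_M -> R),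
    [/\ (forall i, K (c i)),
        (forall i, 0 < r i < 1),
        K `<=` \bigcup_(i in [set: 'I_M]) eball (c i) (r i),
        (forall i, f @` (eball (c i) (r i) `&` K) `<=` eball (f (c i)) delta) &
        (forall i j, i != j -> r i <= enorm (c i - c j))].

(* M(f,K,delta): the minimal admissible M (0 by convention if none exists) *)
Definition Mcover (n m : nat) (f : 'cV[R]_n -> 'cV[R]_m)
    (K : set 'cV[R]_n) (delta : R) : nat :=
  match pselect (exists M, cover_ok f K delta M) with
  | left H =>
      @ex_minn (fun M => `[< cover_ok f K delta M >])
        (let: ex_intro M HM := H in ex_intro _ M (asboolT HM))
  | right _ => 0%N
  end.

Definition piecewise_diff (h : R -> R) : Prop :=
  exists s : seq R, forall x, x \notin s -> derivable h x 1.

Definition radial (k : nat) (h : R -> R) (v : 'cV[R]_k) : 'cV[R]_k :=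
  if v == 0 then 0 else (h (enorm v) / enorm v) *: v.

Record rlayer (a b : nat) := RLayer {
  rl_W : 'M[R]_(b, a);
  rl_b : 'cV[R]_b;
  rl_h : R -> R;
  rl_hP : piecewise_diff rl_h }.

Definition rlayer_eval (a b : nat) (l : rlayer a b) (x : 'cV[R]_a) : 'cV[R]_b :=
  radial (rl_h l) (rl_W l *m x + rl_b l).

Inductive rnet : nat -> nat -> Type :=
| RNLast a b : rlayer a b -> rnet a b
| RNCons a b c : rlayer a b -> rnet b c -> rnet a c.

Fixpoint rnet_eval (a b : nat) (N : rnet a b) : 'cV[R]_a -> 'cV[R]_b :=
  match N in rnet a b return 'cV[R]_a -> 'cV[R]_b with
  | RNLast _ _ l => rlayer_eval l
  | RNCons _ _ _ l N' => fun x => rnet_eval N' (rlayer_eval l x)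
  end.

Fixpoint rnet_widths (a b : nat) (N : rnet a b) : seq nat :=
  match N with
  | RNLast a b _ => [:: a; b]
  | RNCons a _ _ _ N' => a :: rnet_widths N'
  end.

(* hidden-layer widths (n_1, ..., n_{L-1}) *)
Definition hidden_widths (a b : nat) (N : rnet a b) : seq nat :=
  let w := behead (rnet_widths N) in take (size w).-1 w.

End RadialDefs.

(* Main.v *)
Require Import Defs.
From HB Require Import structures.
From mathcomp Require Import all_boot all_order all_algebra.
From mathcomp Require Import all_classical all_reals all_analysis.
From mathcomp Require Import ring lra.
Import Order.TTheory GRing.Theory Num.Theory.
Import numFieldNormedType.Exports.
Local Open Scope classical_set_scope.
Local Open Scope ring_scope.
Set Implicit Arguments. Unset Strict Implicit. Unset Printing Implicit Defensive.

Section Aux.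
Variable R : realType.
Implicit Types (k : nat).

Definition sn k (v : 'cV[R]_k) : R := \sum_(i < k) v i ord0 ^+ 2.
Definition dot k (u v : 'cV[R]_k) : R := \sum_(i < k) u i ord0 * v i ord0.

Lemma sn_ge0 k (v : 'cV[R]_k) : 0 <= sn v.
Proof. by apply: sumr_ge0 => i _; exact: sqr_ge0. Qed.

Lemma enormE k (v : 'cV[R]_k) : enorm v = Num.sqrt (sn v).
Proof. by []. Qed.

Lemma enorm_ge0 k (v : 'cV[R]_k) : 0 <= enorm v.
Proof. exact: sqrtr_ge0. Qed.

Lemma enorm_sq k (v : 'cV[R]_k) : enorm v ^+ 2 = sn v.
Proof. by rewrite enormE sqr_sqrtr // sn_ge0. Qed.

Lemma sn_eq0 k (v : 'cV[R]_k) : sn v = 0 -> v = 0.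
Proof.
move=> /psumr_eq0P H; apply/matrixP => i j; rewrite (ord1 j) mxE.
by apply/eqP; rewrite -sqrf_eq0; apply/eqP; apply: H => // l _; exact: sqr_ge0.
Qed.

Lemma enorm_eq0 k (v : 'cV[R]_k) : enorm v = 0 -> v = 0.
Proof.
move=> /eqP; rewrite enormE sqrtr_eq0 => H; apply: sn_eq0.
by apply/eqP; rewrite eq_le H sn_ge0.
Qed.

Lemma enorm_gt0 k (v : 'cV[R]_k) : v != 0 -> 0 < enorm v.
Proof.
move=> vn0; rewrite lt_neqAle enorm_ge0 andbT; apply/eqP => /esym/enorm_eq0.
by apply/eqP.
Qed.

Lemma sn_comb k a b (u v : 'cV[R]_k) :
  sn (a *: u - b *: v) = a ^+ 2 * sn u - 2 * a * b * dot u v + b ^+ 2 * sn v.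
Proof.
rewrite /sn /dot !mulr_sumr -sumrB -big_split /=; apply: eq_bigr => i _.
rewrite !mxE; ring.
Qed.

Lemma sn_add k (u v : 'cV[R]_k) :
  sn (u + v) = sn u + 2 * dot u v + sn v.
Proof.
have -> : u + v = 1 *: u - (-1) *: v by rewrite !scaleN1r opprK scale1r.
rewrite sn_comb; ring.
Qed.

Lemma snN k (v : 'cV[R]_k) : sn (- v) = sn v.
Proof. by apply: eq_bigr => i _; rewrite mxE sqrrN. Qed.

Lemma enormN k (v : 'cV[R]_k) : enorm (- v) = enorm v.
Proof. by rewrite !enormE snN. Qed.

Lemma enormB k (u v : 'cV[R]_k) : enorm (u - v) = enorm (v - u).
Proof. by rewrite -enormN opprB. Qed.

Lemma cauchy_schwarz k (u v : 'cV[R]_k) : dot u v ^+ 2 <= sn u * sn v.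
Proof.
have [/sn_eq0 ->|] := eqVneq (sn v) 0.
  rewrite /dot big1 => [|i _]; last by rewrite mxE mulr0.
  by rewrite expr0n /= mulr_ge0 ?sn_ge0.
move=> sn0; have s0 : 0 < sn v by rewrite lt_neqAle eq_sym sn0 sn_ge0.
have := sn_ge0 (sn v *: u - dot u v *: v); rewrite sn_comb => H.
have su := sn_ge0 u.
nra.
Qed.

Lemma enorm_triangle k (u v : 'cV[R]_k) : enorm (u + v) <= enorm u + enorm v.
Proof.
have h0 := enorm_ge0 u; have h1 := enorm_ge0 v.
rewrite -[X in _ <= X]ger0_norm ?addr_ge0 // -sqrtr_sqr enormE.
rewrite ler_sqrt ?sqr_ge0 // sn_add sqrrD !enorm_sq lerD2r lerD2l.
rewrite -[X in _ <= X]mulr_natl ler_pM2l //.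
have := cauchy_schwarz u v; rewrite -!enorm_sq -exprMn => H.
rewrite -[X in _ <= X]ger0_norm ?mulr_ge0 //.
apply: le_trans (ler_norm _) _.
by rewrite -ler_sqr ?normr_ge0 // !real_normK ?num_real.
Qed.

Lemma enorm_tri3 k (x y z : 'cV[R]_k) : enorm (x - z) <= enorm (x - y) + enorm (y - z).
Proof. by have := enorm_triangle (x - y) (y - z); rewrite addrA subrK. Qed.

End Aux.

Section Emb.
Variable R : realType.
Definition emb a b : 'M[R]_(b, a) := \matrix_(i, j) ((i : nat) == j)%:R.

Lemma emb_tr a b : (emb a b)^T = emb b a.
Proof. by apply/matrixP => i j; rewrite !mxE eq_sym. Qed.

Lemma emb_mul a b : (a <= b)%N -> emb b a *m emb a b = 1%:M.
Proof.
move=> ab; apply/matrixP => i j; rewrite !mxE.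
rewrite (bigD1 (widen_ord ab i)) //= big1 => [|k kn]; last first.
  rewrite !mxE; case: eqP => [ik|]; last by rewrite mul0r.
  by move: kn; rewrite -val_eqE /= ik eqxx.
by rewrite !mxE eqxx mul1r addr0 -val_eqE /=; case: (i == j :> nat).
Qed.

Lemma sn_mx k (v : 'cV[R]_k) : sn v = (v^T *m v) ord0 ord0.
Proof. by rewrite /sn !mxE; apply: eq_bigr => i _; rewrite mxE expr2. Qed.

Lemma sn_emb a b (v : 'cV[R]_a) : (a <= b)%N -> sn (emb a b *m v) = sn v.
Proof.
move=> ab; rewrite !sn_mx trmx_mul emb_tr mulmxA -(mulmxA v^T) emb_mul //.
by rewrite mulmx1.
Qed.

Lemma enorm_emb a b (v : 'cV[R]_a) : (a <= b)%N -> enorm (emb a b *m v) = enorm v.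
Proof. by move=> ab; rewrite !enormE sn_emb. Qed.

Lemma emb_mulK a b (v : 'cV[R]_a) : (a <= b)%N -> emb b a *m (emb a b *m v) = v.
Proof. by move=> ab; rewrite mulmxA emb_mul // mul1mx. Qed.
End Emb.

Section Rad.
Variable R : realType.

Definition hsplit (s v : R) (g1 g2 : R -> R) (t : R) : R :=
  if t < s then g1 t else if s < t then g2 t else v.

Lemma pd_split s v (g1 g2 : R -> R) :
  (forall x, derivable g1 x 1) -> (forall x, derivable g2 x 1) ->
  piecewise_diff (hsplit s v g1 g2).
Proof.
move=> d1 d2; exists [:: s] => x; rewrite inE => xs.
have [xls|sxl] := ltP x s.
  apply: (near_eq_derivable _ (d1 x)).
  have : x \in `]-oo, s[ by rewrite in_itv /= xls.
  move=> /near_in_itvNyo; apply: filterS => z; rewrite in_itv /= /hsplit => ->.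
  by [].
have sx : s < x by rewrite lt_neqAle sxl eq_sym xs.
apply: (near_eq_derivable _ (d2 x)).
have : x \in `]s, +oo[ by rewrite in_itv /= sx.
move=> /near_in_itvoy; apply: filterS => z; rewrite in_itv /= /hsplit andbT => sz.
by rewrite sz ltNge (ltW sz).
Qed.

Lemma pd_id : piecewise_diff (fun t : R => t).
Proof. by exists [::] => x _; exact: derivable_id. Qed.

Lemma radial_fix k (h : R -> R) (v : 'cV[R]_k) :
  h (enorm v) = enorm v -> radial h v = v.
Proof.
rewrite /radial; case: eqP => [->//|/eqP vn0 ->].
by rewrite divff ?scale1r // gt_eqF // enorm_gt0.
Qed.

Lemma radial_kill k (h : R -> R) (v : 'cV[R]_k) :
  h (enorm v) = 0 -> radial h v = 0.
Proof. by rewrite /radial; case: eqP => // _ ->; rewrite mul0r scale0r. Qed.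

Lemma radial_val k (h : R -> R) (v : 'cV[R]_k) :
  v != 0 -> radial h v = (h (enorm v) / enorm v) *: v.
Proof. by rewrite /radial => /negbTE ->. Qed.

Lemma radial_idE k (v : 'cV[R]_k) : radial (fun t => t) v = v.
Proof. exact: radial_fix. Qed.
End Rad.

Section Net.
Variable R : realType.

Record bmap d := BMap { bm_a : 'cV[R]_d; bm_h : R -> R; bm_hP : piecewise_diff bm_h }.

Definition bm_eval d (b : bmap d) (z : 'cV[R]_d) : 'cV[R]_d :=
  bm_a b + radial (bm_h b) (z - bm_a b).

Definition chain d (bs : seq (bmap d)) (z : 'cV[R]_d) :=
  foldl (fun z b => bm_eval b z) z bs.

Lemma net_tail d m (bs : seq (bmap d)) (a0 : 'cV[R]_d) (bf : 'cV[R]_m) :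
  exists N : rnet R d m,
    (forall y, rnet_eval N y = emb R d m *m chain bs (y + a0) + bf) /\
    rnet_widths N = nseq (size bs).+1 d ++ [:: m].
Proof.
elim: bs a0 => [|b bs IH] a0.
  exists (RNLast (RLayer (emb R d m) (emb R d m *m a0 + bf) (@pd_id R))).
  split => // y /=; rewrite /rlayer_eval /= radial_idE /chain /=.
  by rewrite mulmxDr addrA.
have [N' [HN' HW]] := IH (bm_a b).
exists (RNCons (RLayer 1%:M (a0 - bm_a b) (bm_hP b)) N'); split; last first.
  by rewrite /= HW.
move=> y /=; rewrite HN' /rlayer_eval /= mul1mx /chain /= /bm_eval.
by rewrite addrA [_ + bm_a b]addrC.
Qed.

Lemma net_full n d m (bs : seq (bmap d)) (b0 : bmap d) (bf : 'cV[R]_m) :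
  (n <= d)%N ->
  exists N : rnet R n m,
    (forall x, rnet_eval N x = emb R d m *m chain bs (bm_eval b0 (emb R n d *m x)) + bf) /\
    hidden_widths N = nseq (size bs).+1 d.
Proof.
move=> nd; have [N' [HN' HW]] := net_tail bs (bm_a b0) bf.
exists (RNCons (RLayer (emb R n d) (- bm_a b0) (bm_hP b0)) N'); split.
  by move=> x /=; rewrite HN' /rlayer_eval /= /bm_eval [_ + bm_a b0]addrC.
rewrite /hidden_widths /= HW size_cat size_nseq /= addn1.
by rewrite -cat_cons take_size_cat //= size_nseq.
Qed.
End Net.
Section Phases.
Variable R : realType.
Variable d : nat.

Definition colb (c : 'cV[R]_d) (r : R) : bmap R d :=
  BMap c (pd_split r r (fun x => @derivable_cst R R R 0 x 1)
                       (fun x => @derivable_id R R x 1)).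

Lemma colb_in c r z : enorm (z - c) < r -> bm_eval (colb c r) z = c.
Proof.
move=> zr; rewrite /bm_eval radial_kill ?addr0 //.
change (hsplit r r (cst 0) id (enorm (z - c)) = 0).
by rewrite /hsplit zr.
Qed.

Lemma colb_out c r z : r <= enorm (z - c) -> bm_eval (colb c r) z = z.
Proof.
move=> zr; rewrite /bm_eval radial_fix.
  by change (c + (z - c) = z); rewrite addrC subrK.
change (hsplit r r (cst 0) id (enorm (z - c)) = enorm (z - c)).
rewrite /hsplit ltNge zr /=; case: ltP => // H.
by apply/eqP; rewrite eq_le H zr.
Qed.
Lemma chain_rcons (bs : seq (bmap R d)) b z :
  chain (rcons bs b) z = bm_eval b (chain bs z).
Proof. by rewrite /chain -cats1 foldl_cat. Qed.

Lemma collapse_chain (cc : nat -> 'cV[R]_d) (r : nat -> R) M y :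
  (forall i j, (i < M)%N -> (j < M)%N -> i != j -> r i <= enorm (cc j - cc i)) ->
  forall k, (k <= M)%N ->
  let z := chain [seq colb (cc i) (r i) | i <- iota 0 k] y in
  (z = y /\ forall i, (i < k)%N -> r i <= enorm (y - cc i)) \/
  (exists2 j, (j < k)%N & enorm (y - cc j) < r j /\ z = cc j).
Proof.
move=> sep; elim=> [|k IH] kM; first by left.
have {IH} := IH (ltnW kM).
rewrite [iota 0 k.+1](_ : _ = iota 0 k ++ [:: k]); last by rewrite -addn1 iotaD.
rewrite map_cat cats1 chain_rcons.
move: (chain _ y) => z.
move=> [[-> Hi]|[j jk [yj ->]]].
  have [yk|yk] := ltP (enorm (y - cc k)) (r k).
    by right; exists k => //; split => //; rewrite colb_in.
  left; split; first by rewrite colb_out.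
  move=> i; rewrite ltnS leq_eqVlt => /orP[/eqP ->//|]; exact: Hi.
right; exists j; first by rewrite ltnW // ltnS.
split => //; rewrite colb_out //; apply: sep => //.
  by apply: leq_trans jk (ltnW kM).
by apply/eqP => kj; move: jk; rewrite -kj ltnn.
Qed.

Lemma sum_abs_ge (l : seq R) b : b \in l -> `|b| <= \sum_(c <- l) `|c|.
Proof.
move=> bl; rewrite (big_rem _ bl) /= lerDl; apply: sumr_ge0 => c _.
exact: normr_ge0.
Qed.

Definition movb (s v : R) (a : 'cV[R]_d) : bmap R d :=
  BMap a (pd_split s v (fun x => @derivable_id R R x 1)
                       (fun x => @derivable_id R R x 1)).

Lemma move_pt (p T : 'cV[R]_d) (Ys : seq 'cV[R]_d) :
  T != p -> (forall y, y \in Ys -> y != p) ->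
  exists b : bmap R d, bm_eval b p = T /\ forall y, y \in Ys -> bm_eval b y = y.
Proof.
move=> Tp Yp; set w := T - p.
have wn0 : w != 0 by rewrite subr_eq0.
set bad := [seq sn (y - p) / (2 * dot (y - p) w) | y <- Ys].
set th := 1 + \sum_(c <- bad) `|c|.
have th0 : 0 < th.
  by rewrite /th ltr_pwDl // sumr_ge0 // => c _; exact: normr_ge0.
have thbad : th \notin bad.
  apply/negP => /sum_abs_ge; rewrite ger0_norm ?(ltW th0) // /th => H.
  lra.
set a := p + th *: w.
have pa : p - a = - (th *: w) by rewrite /a opprD addrA subrr add0r.
have pan0 : p - a != 0 by rewrite pa oppr_eq0 scaler_eq0 negb_or wn0 gt_eqF.
set s := enorm (p - a).
have s0 : 0 < s by exact: enorm_gt0.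
exists (movb s (s * ((th - 1) / th)) a); split.
  change (a + radial (hsplit s (s * ((th - 1) / th)) id id) (p - a) = T).
  rewrite radial_val // -/s /hsplit ltxx [s * _]mulrC mulfK ?gt_eqF //.
  rewrite pa scalerN scalerA mulfVK ?gt_eqF // /a scalerBl scale1r.
  by rewrite opprB [w - _]addrC addrA addrK /w addrC subrK.
move=> y yY.
change (a + radial (hsplit s (s * ((th - 1) / th)) id id) (y - a) = y).
rewrite radial_fix; first by rewrite addrC subrK.
have ys : enorm (y - a) != s.
  apply/negP => /eqP ys.
  have : sn (y - a) = sn (p - a) by rewrite -!enorm_sq ys.
  have -> : y - a = 1 *: (y - p) - th *: w by rewrite scale1r /a opprD addrA.
  have -> : p - a = 1 *: (p - p) - th *: w by rewrite subrr scale1r sub0r pa.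
  have sn0 : sn (0 : 'cV[R]_d) = 0.
    by rewrite /sn big1 // => i _; rewrite mxE expr0n.
  have dt0 : dot 0 w = 0.
    by rewrite /dot big1 // => i _; rewrite mxE mul0r.
  rewrite !sn_comb subrr sn0 dt0 => E.
  have E2 : sn (y - p) = 2 * th * dot (y - p) w.
    move: E; set A := sn (y - p); set B := th * dot (y - p) w; set C := th ^+ 2 * sn w.
    rewrite expr1n !mul1r mulr0 subr0 add0r -!mulrA -/B => E; lra.
  have [dz|dn] := eqVneq (dot (y - p) w) 0.
    move: E2; rewrite dz mulr0 => /sn_eq0 /eqP; rewrite subr_eq0 => /eqP yp.
    by move: (Yp y yY); rewrite yp eqxx.
  move/negP: thbad; apply; apply/mapP; exists y => //.
  rewrite E2 [2 * th]mulrC -mulrA.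
  by rewrite mulrA -[th * 2 * _]mulrA mulfK // mulf_neq0 // pnatr_eq0.
by rewrite /hsplit; case: ltgtP ys => //; rewrite eqxx.
Qed.
End Phases.

Section MoveChain.
Variable R : realType.
Variable d : nat.

Lemma move_chain (p T : nat -> 'cV[R]_d) M :
  (forall i j, (i < M)%N -> (j < M)%N -> i != j -> p i != p j) ->
  (forall i j, (i < M)%N -> (j < M)%N -> T i != p j) ->
  exists ms : seq (bmap R d), size ms = M /\
    forall j, (j < M)%N -> chain ms (p j) = T j.
Proof.
move=> pd Tp.
suff H : forall k, (k <= M)%N -> exists ms : seq (bmap R d), size ms = k /\
    forall j, (j < M)%N -> chain ms (p j) = if (j < k)%N then T j else p j.
  have [ms [sz Hms]] := H M (leqnn M); exists ms; split => // j jM.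
  by rewrite Hms // jM.
elim=> [|k IH] kM.
  by exists [::]; split => // j jM.
have [ms [sz Hms]] := IH (ltnW kM).
set Ys := map T (iota 0 M) ++ [seq p j | j <- iota 0 M & j != k].
have H1 : T k != p k by apply: Tp.
have H2 : forall y, y \in Ys -> y != p k.
  move=> y; rewrite mem_cat => /orP[/mapP[i]|/mapP[j]].
    by rewrite mem_iota add0n => /andP[_ iM] ->; apply: Tp.
  rewrite mem_filter mem_iota add0n => /andP[jk /andP[_ jM]] ->.
  by apply: pd.
have [b [bk bY]] := move_pt H1 H2.
exists (rcons ms b); split; first by rewrite size_rcons sz.
move=> j jM; rewrite chain_rcons Hms // ltnS.
case: (ltngtP j k) => [jk|kj|->]; last by rewrite bk.
  apply: bY; rewrite mem_cat; apply/orP; left.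
  by apply/mapP; exists j; rewrite // mem_iota.
apply: bY; rewrite mem_cat; apply/orP; right.
by apply/mapP; exists j => //; rewrite mem_filter gt_eqF ?mem_iota.
Qed.
End MoveChain.

Section Cover.
Variable R : realType.

Lemma ballE k (x y : 'cV[R]_k) e :
  ball x e y <-> (0 < e /\ forall i j, `|x i j - y i j| < e).
Proof.
rewrite /ball /=. split => -[e0 H]; split => // i j; move: (H i j); by rewrite /ball /=.
Qed.

Lemma coord_le k (v : 'cV[R]_k) i : `|v i ord0| <= enorm v.
Proof.
rewrite enormE -sqrtr_sqr ler_sqrt ?sn_ge0 //.
rewrite /sn (bigD1 i) //= lerDl sumr_ge0 // => j _; exact: sqr_ge0.
Qed.

Lemma enorm_ball k (x y : 'cV[R]_k) e : enorm (x - y) < e -> ball x e y.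
Proof.
move=> H; apply/ballE; split; first exact: le_lt_trans (enorm_ge0 _) H.
move=> i j; rewrite (ord1 j); apply: le_lt_trans H.
by have := coord_le (x - y) i; rewrite !mxE.
Qed.

Lemma ball_enorm k (x y : 'cV[R]_k) e : ball x e y -> enorm (x - y) < e * k.+1%:R.
Proof.
move=> /ballE [e0 H].
have H1 : sn (x - y) <= \sum_(i < k) e ^+ 2.
  apply: ler_sum => i _; rewrite !mxE -[X in X <= _]real_normK ?num_real //.
  have h1 := H i ord0; have h2 := normr_ge0 (x i ord0 - y i ord0); nra.
rewrite sumr_const card_ord in H1.
have k0 : 0 <= k%:R :> R by [].
rewrite enormE -[X in _ < X]ger0_norm ?mulr_ge0 ?ltW //.
rewrite -sqrtr_sqr ltr_sqrt ?exprn_gt0 ?mulr_gt0 ?normr_gt0 //.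
rewrite -mulr_natr in H1; rewrite -natr1.
apply: le_lt_trans H1 _; nra.
Qed.

Lemma posmin (T : eqType) (s : seq T) (g : T -> R) :
  exists2 l, 0 < l & forall x, x \in s -> 0 < g x -> l <= g x.
Proof.
elim: s => [|a s [l l0 IH]]; first by exists 1.
have [ga|ga] := ltP 0 (g a).
  exists (Num.min (g a) l); first by rewrite lt_min ga l0.
  move=> x; rewrite inE => /orP[/eqP ->|xs] gx; first by rewrite ge_min lexx.
  by rewrite ge_min IH ?orbT.
exists l => // x; rewrite inE => /orP[/eqP -> gx|xs gx]; last exact: IH.
by move: ga; rewrite leNgt gx.
Qed.

Lemma cont_pt n m (K : set 'cV[R]_n) (f : 'cV[R]_n -> 'cV[R]_m) x e :
  {within K, continuous f} -> K x -> 0 < e ->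
  exists2 d, 0 < d & forall y, K y -> ball x d y -> ball (f x) e (f y).
Proof.
move=> /subspace_continuousP fc Kx e0.
have := fc x Kx (ball (f x) e) (nbhsx_ballx _ _ e0).
rewrite /= nbhs_simpl /within /= => /nbhs_ballP [d d0 H].
exists d => // y Ky bxy; exact: H.
Qed.
End Cover.

Section Cover2.
Variable R : realType.

Lemma unif_cont n m (K : set 'cV[R]_n) (f : 'cV[R]_n -> 'cV[R]_m) eps :
  compact K -> {within K, continuous f} -> 0 < eps ->
  exists2 t, 0 < t & forall y z, K y -> K z -> enorm (y - z) < t ->
    enorm (f y - f z) < eps.
Proof.
move=> cK fc e0.
have e'0 : 0 < eps / 2 / m.+1%:R by rewrite !divr_gt0.
have H : forall x, exists dl : R, K x -> 0 < dl /\
    forall y, K y -> ball x dl y -> enorm (f x - f y) < eps / 2.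
  move=> x; case: (pselect (K x)) => Kx; last by exists 1.
  have [dl dl0 Hd] := cont_pt fc Kx e'0.
  exists dl => _; split => // y Ky bxy.
  by have := ball_enorm (Hd y Ky bxy); rewrite mulfVK // pnatr_eq0.
have [dl Hdl] := choice H.
pose rho x := dl x / 2.
have cov : K `<=` cover K (fun x => ball x (rho x)).
  move=> x Kx; exists x => //; apply: ballxx.
  by rewrite /rho divr_gt0 //; case: (Hdl x Kx).
move: cK; rewrite compact_cover => cK.
have [D' D'K Dcov] := cK _ K (fun x => ball x (rho x)) (fun x _ => ball_open _ _) cov.
have [l l0 Hl] := posmin (finmap.enum_fset D') rho.
exists l => // y z Ky Kz yz.
have [x /= xD bxy] := Dcov y Ky.
have Kx : K x.
  by have := D'K x xD; rewrite inE.
have [dl0 Hd] := Hdl x Kx.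
have rx : l <= rho x by apply: Hl => //; rewrite /rho divr_gt0.
have bxz : ball x (dl x) z.
  apply: (le_ball (e1 := rho x + l)); last exact: ball_triangle bxy (enorm_ball yz).
  by move: rx; rewrite /rho => rx; lra.
have bxy' : ball x (dl x) y.
  by apply: (le_ball (e1 := rho x)) bxy; rewrite /rho; lra.
have h1 := Hd y Ky bxy'; have h2 := Hd z Kz bxz.
have := enorm_tri3 (f y) (f x) (f z); rewrite [enorm (f y - f x)]enormB; lra.
Qed.

Lemma sep_bound n (K : set 'cV[R]_n) t0 : compact K -> 0 < t0 ->
  exists N, forall k (c : nat -> 'cV[R]_n), (forall i, (i < k)%N -> K (c i)) ->
    (forall i j, (i < k)%N -> (j < k)%N -> i != j -> t0 <= enorm (c i - c j)) ->
    (k <= N)%N.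
Proof.
move=> cK t00.
have r0 : 0 < t0 / 2 / n.+1%:R by rewrite !divr_gt0.
set rho := t0 / 2 / n.+1%:R.
have cov : K `<=` cover K (fun x => ball x rho).
  by move=> x Kx; exists x => //; apply: ballxx.
move: cK; rewrite compact_cover => cK.
have [D' D'K Dcov] := cK _ K (fun x => ball x rho) (fun x _ => ball_open _ _) cov.
exists (size (finmap.enum_fset D')) => k c Kc sep.
have H : forall i, exists x : 'cV[R]_n, (i < k)%N -> x \in finmap.enum_fset D' /\ ball x rho (c i).
  move=> i; case: (ltnP i k) => ik; last by exists 0.
  by have [x /= xD bx] := Dcov _ (Kc i ik); exists x.
have [g Hg] := choice H.
have -> : k = size (map g (iota 0 k)) by rewrite size_map size_iota.
apply: uniq_leq_size.
  rewrite map_inj_in_uniq ?iota_uniq // => i j; rewrite !mem_iota !add0n /=.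
  move=> ik jk gij; apply/eqP; apply: contraT => ij.
  have := sep i j ik jk ij.
  have [_ b1] := Hg i ik; have [_ b2] := Hg j jk.
  have := ball_enorm b1; have := ball_enorm b2.
  rewrite /rho mulfVK ?pnatr_eq0 // gij => h2 h1.
  have := enorm_tri3 (c i) (g j) (c j); rewrite [enorm (c i - g j)]enormB => h3 h4; lra.
move=> x /mapP [i]; rewrite mem_iota add0n => /andP[_ ik] ->.
by have [] := Hg i ik.
Qed.
End Cover2.

Section Cover3.
Variable R : realType.

Lemma cover_exists n m (K : set 'cV[R]_n) (f : 'cV[R]_n -> 'cV[R]_m) delta :
  compact K -> {within K, continuous f} -> 0 < delta ->
  exists M, cover_ok f K delta M.
Proof.
move=> cK fc d0.
have [t t0 Ht] := unif_cont cK fc d0.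
pose t1 := Num.min t (1 / 2).
have t10 : 0 < t1 by rewrite lt_min t0 divr_gt0.
have t11 : t1 < 1 by rewrite gt_min; apply/orP; right; lra.
have t1t : t1 <= t by rewrite ge_min lexx.
have [N HN] := sep_bound cK t10.
pose Good k (c : nat -> 'cV[R]_n) := (forall i, (i < k)%N -> K (c i)) /\
    (forall i j, (i < k)%N -> (j < k)%N -> i != j -> t1 <= enorm (c i - c j)).
pose Cov k (c : nat -> 'cV[R]_n) :=
  forall x, K x -> exists2 i, (i < k)%N & enorm (x - c i) < t1.
have step : forall k, (k <= N.+1)%N ->
    (exists k' c, Good k' c /\ Cov k' c) \/ (exists c, Good k c).
  elim=> [|k IH] kN.
    by right; exists (fun _ => 0); split => // i.
  case: (IH (ltnW kN)) => [|[c [Kc sep]]]; first by left.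
  case: (pselect (Cov k c)) => [cv|ncv]; first by left; exists k, c.
  have [x Kx nx] : exists2 x, K x & forall i, (i < k)%N -> t1 <= enorm (x - c i).
    apply: contra_notP ncv => H x Kx; apply: contra_notP H => H.
    exists x => // i ik; rewrite leNgt; apply/negP => xi; apply: H; by exists i.
  right; exists (fun i => if i == k then x else c i); split.
    by move=> i; rewrite ltnS leq_eqVlt; case: eqP => // _ /= ik; apply: Kc.
  move=> i j ik jk ij.
  have [iek|ine] := eqVneq i k; have [jek|jne] := eqVneq j k.
  - by move: ij; rewrite iek jek eqxx.
  - apply: nx; by rewrite ltn_neqAle jne -ltnS.
  - rewrite enormB; apply: nx; by rewrite ltn_neqAle ine -ltnS.
  - apply: sep => //; [by rewrite ltn_neqAle ine -ltnS | by rewrite ltn_neqAle jne -ltnS].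
case: (step N.+1 (leqnn _)) => [[M [c [[Kc sep] cv]]]|[c Gc]]; last first.
  by have := HN N.+1 c Gc.1 Gc.2; rewrite ltnn.
exists M, (fun i => c i), (fun _ => t1); split.
- by move=> i; apply: Kc.
- by move=> i; rewrite t10 t11.
- move=> x Kx; have [i iM xi] := cv x Kx.
  by exists (Ordinal iM).
- move=> i _ [y [yi Ky] <-]; rewrite /eball /=.
  apply: Ht => //; first exact: Kc.
  exact: lt_le_trans yi t1t.
- by move=> i j ij; apply: sep.
Qed.
End Cover3.

Lemma enorm0 (R : realType) k : enorm (0 : 'cV[R]_k) = 0.
Proof. by rewrite enormE /sn big1 ?sqrtr0 // => i _; rewrite mxE expr0n. Qed.

Unset Implicit Arguments. Set Strict Implicit. Set Printing Implicit Defensive.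

Theorem theorem6 (R : realType) (n m : nat) (K : set 'cV[R]_n)
    (f : 'cV[R]_n -> 'cV[R]_m) (eps : R) :
  (2 <= n)%N -> compact K -> {within K, continuous f} -> 0 < eps ->
  exists F : 'cV[R]_n -> 'cV[R]_m,
    (exists N : rnet R n m,
        F = rnet_eval N /\
        hidden_widths N = nseq (2 * Mcover f K (eps / 2)) (maxn n m)) /\
    (forall x, K x -> enorm (F x - f x) < eps).
Proof.
move=> n2 cK fc e0.
have e20 : 0 < eps / 2 by rewrite divr_gt0.
have Hc : cover_ok f K (eps / 2) (Mcover f K (eps / 2)).
  rewrite /Mcover; case: pselect => [H|H]; last first.
    by exfalso; apply: H; exact: cover_exists.
  by case: ex_minnP => M /asboolP.
move: (Mcover f K (eps / 2)) Hc => Mc [c [r [Kc r01 cov fball sep]]].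
case: Mc c r Kc r01 cov fball sep => [|M'] c r Kc r01 cov fball sep.
  pose l : rlayer R n m := RLayer (0 : 'M[R]_(m, n)) 0 (@pd_id R).
  exists (rnet_eval (RNLast l)); split; first by exists (RNLast l).
  by move=> x /cov [[]].
set M := M'.+1.
set d := maxn n m.
have nd : (n <= d)%N := leq_maxl n m.
have md : (m <= d)%N := leq_maxr n m.
pose cn (i : nat) := c (inord i).
pose rr (i : nat) := r (inord i).
pose cc (i : nat) := emb R n d *m cn i.
have rpos : forall i, 0 < rr i by move=> i; case/andP: (r01 (inord i)).
have sepn : forall i j, (i < M)%N -> (j < M)%N -> i != j -> rr i <= enorm (cc j - cc i).
  move=> i j iM jM ij; rewrite /cc -mulmxBr enorm_emb // enormB.
  apply: sep; apply: contraNneq ij => E.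
  by move/(congr1 val): E; rewrite /= !inordK // => ->.
have ccn : forall i j, (i < M)%N -> (j < M)%N -> i != j -> cc i != cc j.
  move=> i j iM jM ij; apply/eqP => E.
  have := sepn j i jM iM; rewrite eq_sym ij E subrr enorm0 => /(_ isT).
  by rewrite leNgt rpos.
have [bf [ms [szms Hms]]] : exists (bf : 'cV[R]_m) (ms : seq (bmap R d)),
    size ms = M /\ forall j, (j < M)%N -> (0 < m)%N ->
      emb R d m *m chain ms (cc j) + bf = f (cn j).
  case: (posnP m) => [m0|mpos].
    exists 0, (nseq M (colb 0 1)); split; first by rewrite size_nseq.
    by move=> j _.
  pose i0 : 'I_m := Ordinal mpos.
  pose bad := [seq (f (cn i) - emb R d m *m cc j) i0 ord0 | i <- iota 0 M, j <- iota 0 M].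
  pose lam := 1 + \sum_(b <- bad) `|b|.
  pose bf : 'cV[R]_m := const_mx lam.
  pose T (j : nat) := emb R m d *m (f (cn j) - bf).
  have Tne : forall i j, (i < M)%N -> (j < M)%N -> T i != cc j.
    move=> i j iM jM; apply/eqP => E.
    have : emb R d m *m T i = emb R d m *m cc j by rewrite E.
    rewrite emb_mulK // => E2.
    have E3 : bf = f (cn i) - emb R d m *m cc j by rewrite -E2 opprB addrC subrK.
    have : lam \in bad.
      have -> : lam = bf i0 ord0 by rewrite mxE.
      rewrite E3; apply: (allpairs_f (fun i j => (f (cn i) - emb R d m *m cc j) i0 ord0));
        by rewrite mem_iota.
    move=> /sum_abs_ge; rewrite /lam => H.
    have h0 : 0 <= \sum_(b <- bad) `|b| by apply: sumr_ge0 => b _; exact: normr_ge0.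
    move: H; rewrite ger0_norm; first by move=> H; lra.
    lra.
  have [ms [szms Hms]] := move_chain ccn Tne.
  exists bf, ms; split => // j jM _.
  by rewrite Hms // emb_mulK // subrK.
pose b0 := colb (cc 0%N) (rr 0%N).
pose rest := [seq colb (cc i) (rr i) | i <- iota 1 M'].
have [N [HN HW]] := net_full (rest ++ ms) b0 bf nd.
exists (rnet_eval N); split.
  exists N; split => //; rewrite HW size_cat size_map size_iota szms.
  by rewrite mul2n -addnn addSn.
move=> x Kx; rewrite HN.
set y := emb R n d *m x.
have [i _ xi] := cov x Kx.
have := collapse_chain y sepn (leqnn M).
rewrite /= -/b0 -/rest /= => -[[_ Hall]|[j jM [yj chj]]].
  have := Hall i (ltn_ord i).
  rewrite /y /cc -mulmxBr enorm_emb // /cn /rr inord_val leNgt.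
  by move: xi; rewrite /eball /= => ->.
have -> : chain (rest ++ ms) (bm_eval b0 y) = chain ms (cc j).
  by rewrite /chain foldl_cat; congr foldl.
case: (posnP m) => [m0|mpos].
  rewrite enormE /sn big1 ?sqrtr0 // => k _.
  by have := ltn_ord k; rewrite {2}m0.
rewrite Hms //.
have xj : (eball (c (inord j)) (r (inord j)) `&` K) x.
  split => //; move: yj; rewrite /eball /= /y /cc -mulmxBr enorm_emb //.
have := fball (inord j) (f x) (ex_intro2 _ _ x xj erefl).
rewrite /eball /= enormB -/(cn j) => H; lra.
Qed.
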